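(* Let $\mathfrak g$ be a complex Lie algebra and $A_0,A_1\in\mathfrak g$. Put $G_1=\frac14[A_1,A_0]$ and define elements $A_m$ ($m\in\mathbb Z$) recursively (in both directions) by $A_{m-1}-A_{m+1}=\frac12[A_m,G_1]$, and then $G_m=\frac14[A_m,A_0]$ for all $m\in\mathbb Z$. The following are equivalent: (I) (Dolan–Grady condition) $[A_1,[A_1,[A_1,A_0]]]=16[A_1,A_0]$ and $[A_0,[A_0,[A_0,A_1]]]=16[A_0,A_1]$; (II) for all $m,l\in\mathbb Z$: $[A_m,A_l]=4G_{m-l}$, $[A_m,G_l]=2A_{m-l}-2A_{m+l}$, $[G_m,G_l]=0$.
   Context: All Lie algebras are over $\mathbb C$. *)

(* Defs.v *)
From mathcomp Require Import all_boot all_order all_algebra.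
From mathcomp Require Import reals.
From mathcomp.real_closed Require Import complex.
Set Implicit Arguments. Unset Strict Implicit. Unset Printing Implicit Defensive.
Import GRing.Theory Num.Theory.
Local Open Scope ring_scope.

Definition lie_bracket (K : fieldType) (V : lmodType K) (br : V -> V -> V) : Prop :=
  [/\ (forall (a : K) (x y z : V), br (a *: x + y) z = a *: br x z + br y z),
      (forall (a : K) (x y z : V), br x (a *: y + z) = a *: br x y + br x z),
      (forall x : V, br x x = 0)
    & (forall x y z : V, br x (br y z) + br y (br z x) + br z (br x y) = 0)].

(* Main.v *)
Require Import Defs.
From mathcomp Require Import all_boot all_order all_algebra.
From mathcomp Require Import reals.
From mathcomp.real_closed Require Import complex.
Import GRing.Theory Num.Theory.
Local Open Scope ring_scope.

From mathcomp Require Import ring zify.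
Set Warnings "-notation-overridden".

Inductive lx (K : Type) : Type :=
  LA of nat | LP of lx K & lx K | LN of lx K | LS of K & lx K | L0.
Arguments L0 {K}.

Fixpoint lev {K : pzRingType} {V : lmodType K} (env : seq V) (e : lx K) : V :=
  match e with
  | LA n => nth 0 env n
  | LP a b => lev env a + lev env b
  | LN a => - lev env a
  | LS k a => k *: lev env a
  | L0 => 0
  end.

Fixpoint lco {K : pzRingType} (e : lx K) (n : nat) : K :=
  match e with
  | LA m => if Nat.eqb m n then 1 else 0
  | LP a b => lco a n + lco b n
  | LN a => - lco a n
  | LS k a => k * lco a n
  | L0 => 0
  end.

Lemma lev_sum (K : pzRingType) (V : lmodType K) (env : seq V) (e : lx K) :
  lev env e = \sum_(i < size env) lco e i *: env`_i.
Proof.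
elim: e => [n|a IHa b IHb|a IHa|k a IHa|] /=.
- case: (ltnP n (size env)) => h.
    rewrite (bigD1 (Ordinal h)) //= PeanoNat.Nat.eqb_refl scale1r big1 ?addr0 //.
    move=> i /eqP ne; case: PeanoNat.Nat.eqb_spec => [e|_]; last by rewrite scale0r.
    by case: ne; apply: val_inj.
  rewrite nth_default // big1 // => i _.
  case: PeanoNat.Nat.eqb_spec => [e|_]; last by rewrite scale0r.
  by have := ltn_ord i; rewrite -e ltnNge h.
- by rewrite IHa IHb -big_split; apply: eq_bigr => i _; rewrite scalerDl.
- by rewrite IHa -sumrN; apply: eq_bigr => i _; rewrite scaleNr.
- by rewrite IHa scaler_sumr; apply: eq_bigr => i _; rewrite scalerA.
- by rewrite big1 // => i _; rewrite scale0r.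
Qed.

Fixpoint conjn (n : nat) (P : nat -> Prop) : Prop :=
  match n with 0 => True | S k => conjn k P /\ P k end.

Lemma conjnP n P : conjn n P -> forall i, (i < n)%N -> P i.
Proof.
elim: n => [|n IH] //= [H1 H2] i; rewrite ltnS leq_eqVlt => /orP[/eqP->//|].
exact: IH.
Qed.

Lemma lx_eq (K : pzRingType) (V : lmodType K) (env : seq V) (e1 e2 : lx K) :
  conjn (size env) (fun i => lco e1 i = lco e2 i) -> lev env e1 = lev env e2.
Proof.
move=> H; rewrite !lev_sum; apply: eq_bigr => i _.
by rewrite (@conjnP _ _ H i (ltn_ord i)).
Qed.

Ltac lx_idx t env :=
  lazymatch env with
  | nil => constr:(@None nat)
  | (?h :: ?tl) =>
      let b := constr:(ltac:(tryif unify h t then exact true else exact false)) in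
      lazymatch b with
      | true => constr:(Some 0%N)
      | false => let r := lx_idx t tl in
             lazymatch r with
             | Some ?k => constr:(Some (S k))
             | None => constr:(@None nat)
             end
      end
  end.

Ltac lx_reify K env t :=
  lazymatch t with
  | @GRing.add _ ?a ?b =>
      let p := lx_reify K env a in
      lazymatch p with (?env1, ?ea) =>
        let q := lx_reify K env1 b in
        lazymatch q with (?env2, ?eb) => constr:((env2, @LP K ea eb)) end end
  | @GRing.opp _ ?a =>
      let p := lx_reify K env a in
      lazymatch p with (?env1, ?ea) => constr:((env1, @LN K ea)) end
  | @GRing.scale _ _ ?k ?a =>
      let p := lx_reify K env a in
      lazymatch p with (?env1, ?ea) => constr:((env1, @LS K k ea)) end
  | @GRing.zero _ => constr:((env, @L0 K))
  | _ =>
      let r := lx_idx t env in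
      lazymatch r with
      | Some ?k => constr:((env, @LA K k))
      | None => let n := eval compute in (size env) in
                let env' := eval cbn [cat] in (env ++ [:: t]) in
                constr:((env', @LA K n))
      end
  end.

Ltac lcomb_close := idtac.

Ltac lcomb K :=
  lazymatch goal with
  | |- ?l = ?r =>
      let V := type of l in
      let p := lx_reify K (@nil V) l in
      lazymatch p with (?env1, ?el) =>
        let q := lx_reify K env1 r in
        lazymatch q with (?env2, ?er) =>
          change (lev env2 el = lev env2 er); apply: lx_eq;
          cbn [conjn lco size Nat.eqb]; repeat split; field; try done
        end end
  end.


Lemma lin_use (K : pzRingType) (V : lmodType K) (l r s : V) : l - r = s -> s = 0 -> l = r.
Proof. by move=> h1 h2; apply/eqP; rewrite -subr_eq0 h1 h2. Qed.

Lemma subE {K : pzRingType} {V : lmodType K} {p q : V} : p = q -> p - q = 0.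
Proof. by move->; rewrite subrr. Qed.


Lemma lbP {K : fieldType} {V : lmodType K} {br : V -> V -> V} :
  lie_bracket br ->
  [/\ (forall (a : K) (x y z : V), br (a *: x + y) z = a *: br x z + br y z),
      (forall (a : K) (x y z : V), br x (a *: y + z) = a *: br x y + br x z),
      (forall x : V, br x x = 0)
    & (forall x y z : V, br x (br y z) + br y (br z x) + br z (br x y) = 0)].
Proof. by []. Qed.

Lemma brDl {K : fieldType} {V : lmodType K} {br : V -> V -> V} :
  lie_bracket br -> forall x y z, br (x + y) z = br x z + br y z.
Proof. by move/lbP; case=> H1 _ _ _ x y z; rewrite -{1}[x]scale1r H1 scale1r. Qed.
Lemma brDr {K : fieldType} {V : lmodType K} {br : V -> V -> V} :
  lie_bracket br -> forall x y z, br x (y + z) = br x y + br x z.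
Proof. by move/lbP; case=> _ H1 _ _ x y z; rewrite -{1}[y]scale1r H1 scale1r. Qed.
Lemma br0l {K : fieldType} {V : lmodType K} {br : V -> V -> V} :
  lie_bracket br -> forall z, br 0 z = 0.
Proof.
move=> H z; have := brDl H 0 0 z; rewrite addr0 -{1}[br 0 z]addr0.
by move=> /addrI <-.
Qed.
Lemma br0r {K : fieldType} {V : lmodType K} {br : V -> V -> V} :
  lie_bracket br -> forall z, br z 0 = 0.
Proof.
move=> H z; have := brDr H z 0 0; rewrite addr0 -{1}[br z 0]addr0.
by move=> /addrI <-.
Qed.
Lemma brZl {K : fieldType} {V : lmodType K} {br : V -> V -> V} :
  lie_bracket br -> forall a x z, br (a *: x) z = a *: br x z.
Proof. by move=> H a x z; case: (lbP H) => H1 _ _ _; rewrite -[a *: x]addr0 H1 (br0l H) addr0. Qed.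
Lemma brZr {K : fieldType} {V : lmodType K} {br : V -> V -> V} :
  lie_bracket br -> forall a x z, br z (a *: x) = a *: br z x.
Proof. by move=> H a x z; case: (lbP H) => _ H1 _ _; rewrite -[a *: x]addr0 H1 (br0r H) addr0. Qed.
Lemma brNl {K : fieldType} {V : lmodType K} {br : V -> V -> V} :
  lie_bracket br -> forall x z, br (- x) z = - br x z.
Proof. by move=> H x z; rewrite -scaleN1r (brZl H) scaleN1r. Qed.
Lemma brNr {K : fieldType} {V : lmodType K} {br : V -> V -> V} :
  lie_bracket br -> forall x z, br z (- x) = - br z x.
Proof. by move=> H x z; rewrite -scaleN1r (brZr H) scaleN1r. Qed.
Lemma brxx {K : fieldType} {V : lmodType K} {br : V -> V -> V} :
  lie_bracket br -> forall x, br x x = 0.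
Proof. by move/lbP; case. Qed.
Lemma brC {K : fieldType} {V : lmodType K} {br : V -> V -> V} :
  lie_bracket br -> forall x y, br x y = - br y x.
Proof.
move=> H x y; have := brxx H (x + y).
rewrite (brDl H) !(brDr H) !(brxx H) add0r addr0 => /eqP; rewrite addr_eq0 => /eqP //.
Qed.
Lemma jac {K : fieldType} {V : lmodType K} {br : V -> V -> V} :
  lie_bracket br -> forall x y z, br x (br y z) = br (br x y) z + br y (br x z).
Proof.
move=> H x y z; case: (lbP H) => _ _ _ J; have := J x y z.
rewrite (brC H z x) (brC H z (br x y)) (brNr H) => J'.
by apply/eqP; rewrite -subr_eq0 -J'; apply/eqP; lcomb K.
Qed.

Ltac bx H := repeat (first [ rewrite (brDl H) | rewrite (brDr H) | rewrite (brNl H)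
  | rewrite (brNr H) | rewrite (brZl H) | rewrite (brZr H) | rewrite (br0l H) | rewrite (br0r H) ]).

Ltac dx H b h1 h2 h3 := repeat progress (bx H; rewrite ?(jac H b) ?h1 ?h2 ?h3 ?(brxx H)).

Lemma core0 (K : numFieldType) (V : lmodType K) (br : V -> V -> V) (b a0 P x : V) :
  lie_bracket br -> br b a0 = 0 -> br b P = 4 *: x -> br b x = 4 *: P ->
  br (a0 + P) (br (a0 + P) x) = 16 *: x ->
  br (a0 - P) (br (a0 - P) x) = 16 *: x.
Proof.
move=> H h1 h2 h3 h4.
pose Z := br a0 (br P x) + br P (br a0 x).
pose W := br a0 (br a0 x) + br P (br P x) - 16 *: x.
pose Y := br x (br a0 x) + br P (br a0 P).
pose U := br P (br a0 x) + br x (br a0 P).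
have hF : Z + W = 0.
  have -> : Z + W = br (a0 + P) (br (a0 + P) x) - 16 *: x by rewrite /Z /W; bx H; lcomb K.
  by rewrite h4 subrr.
have hDZ : br b Z = 4 *: Y.
  rewrite /Z /Y; dx H b h1 h2 h3; lcomb K.
have hDY : br b Y = 8 *: U.
  rewrite /U /Y; dx H b h1 h2 h3; lcomb K.
have hDU : br b U = 8 *: Y.
  rewrite /U /Y; dx H b h1 h2 h3; lcomb K.
pose W1 := 4 *: (br a0 (br a0 P) + br x (br P x)) - 64 *: P.
have hDW : br b W = W1.
  rewrite /W /W1; dx H b h1 h2 h3; lcomb K.
have hDW1 : br b W1 = 16 *: W.
  rewrite /W /W1; dx H b h1 h2 h3; lcomb K.
have hZ : Z = - W by apply/eqP; rewrite -addr_eq0 hF.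
have e1 : br b (br b Z) = 32 *: U by rewrite hDZ (brZr H) hDY; lcomb K.
have e2 : br b (br b Z) = 16 *: Z by rewrite {1}hZ (brNr H) (brNr H) hDW hDW1 hZ; lcomb K.
have e3 : Z = 2 *: U.
  apply: (@lin_use _ _ _ _ ((1/16 : K) *: (br b (br b Z) - 32 *: U) - (1/16 : K) *: (br b (br b Z) - 16 *: Z))).
    lcomb K.
  by rewrite (subE e1) (subE e2) !scaler0 subrr.
have eY : Y = 0.
  have e4 : br b Z = 16 *: Y by rewrite {1}e3 (brZr H) hDU; lcomb K.
  apply: (@lin_use _ _ _ _ ((1/12 : K) *: (br b Z - 4 *: Y) - (1/12 : K) *: (br b Z - 16 *: Y))).
    lcomb K.
  by rewrite (subE e4) (subE hDZ) !scaler0 subrr.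
have eU : U = 0.
  have : (32 : K) *: U = 0 by rewrite -e1 hDZ eY (brZr H) (br0r H) scaler0.
  move/eqP; rewrite scaler_eq0 => /orP[|/eqP //]; by rewrite pnatr_eq0.
have eZ : Z = 0 by rewrite e3 eU scaler0.
have eW : W = 0 by move: hZ; rewrite eZ => /eqP; rewrite eq_sym oppr_eq0 => /eqP.
have -> : br (a0 - P) (br (a0 - P) x) = W + 16 *: x - Z by rewrite /W /Z; bx H; lcomb K.
by rewrite eW eZ add0r subr0.
Qed.

Lemma scI (K : fieldType) (V : lmodType K) (k : K) (u v : V) :
  k != 0 -> k *: u = k *: v -> u = v.
Proof.
move=> hk h; rewrite -[u]scale1r -[v]scale1r -(mulVf hk) -!scalerA h //.
Qed.

Lemma core {K : numFieldType} {V : lmodType K} {br : V -> V -> V} {a b x : V} :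
  lie_bracket br -> br b a = 4 *: x -> br b (br b x) = 16 *: x -> br a (br a x) = 16 *: x ->
  br (a + (1/2) *: br x b) (br (a + (1/2) *: br x b) x) = 16 *: x /\
  br (a + (1/2) *: br x b) b = 4 *: x.
Proof.
move=> H hba hbb haa.
pose P := (1/4 : K) *: br b x.
pose a0 := a - P.
have h1 : br b a0 = 0 by rewrite /a0 /P; bx H; rewrite hba hbb; lcomb K.
have h2 : br b P = 4 *: x by rewrite /P; bx H; rewrite hbb; lcomb K.
have h3 : br b x = 4 *: P by rewrite /P; lcomb K.
have h4 : br (a0 + P) (br (a0 + P) x) = 16 *: x by rewrite /a0 subrK.
have hc : a + (1/2) *: br x b = a0 - P by rewrite (brC H x b) /a0 /P; lcomb K.
rewrite hc; split; first exact: (@core0 _ _ _ _ _ _ _ H h1 h2 h3 h4).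
rewrite (brC H (a0 - P) b) (brDr H) (brNr H) h1 h2; lcomb K.
Qed.

Lemma int_ind2 (P : int -> Prop) : P 0 -> (forall m, P m -> P (m + 1)) ->
  (forall m, P m -> P (m - 1)) -> forall m, P m.
Proof.
move=> h0 hu hd [] n.
  elim: n => // n IH; have := hu _ IH; congr P; lia.
elim: n => [|n IH]; first by have := hd _ h0; congr P.
have := hd _ IH; congr P; rewrite !NegzE; lia.
Qed.

Definition Inv {K : numFieldType} {V : lmodType K} (br : V -> V -> V) (A : int -> V) (x : V) (m : int) :=
  [/\ br (A (m + 1)) (A m) = 4 *: x, br (A m) (br (A m) x) = 16 *: x
    & br (A (m + 1)) (br (A (m + 1)) x) = 16 *: x].

Lemma inv_all (K : numFieldType) (V : lmodType K) (br : V -> V -> V) (A : int -> V) (x : V) :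
  lie_bracket br ->
  (forall m, A (m - 1) - A (m + 1) = (1/2) *: br (A m) x) ->
  Inv br A x 0 -> forall m, Inv br A x m.
Proof.
move=> H Hrec h0; apply: int_ind2 => // m [e1 e2 e3].
- have hc : A m + (1/2) *: br x (A (m + 1)) = A (m + 1 + 1).
    have := Hrec (m + 1); rewrite addrK => h.
    apply: (@lin_use _ _ _ _ (A m - A (m + 1 + 1) - (1/2) *: br (A (m + 1)) x)).
      rewrite (brC H x); lcomb K.
    by rewrite (subE h).
  have [c1 c2] := core H e1 e3 e2.
  by rewrite hc in c1 c2; split.
- have hc : A (m + 1) + (1/2) *: br (- x) (A m) = A (m - 1).
    have := Hrec m => h.
    apply: (@lin_use _ _ _ _ (- (A (m - 1) - A (m + 1) - (1/2) *: br (A m) x))).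
      rewrite (brNl H) (brC H x); lcomb K.
    by rewrite (subE h) oppr0.
  have f1 : br (A m) (A (m + 1)) = 4 *: - x by rewrite (brC H) e1 scalerN.
  have f2 : br (A m) (br (A m) (- x)) = 16 *: - x by rewrite !(brNr H) e2 scalerN.
  have f3 : br (A (m + 1)) (br (A (m + 1)) (- x)) = 16 *: - x by rewrite !(brNr H) e3 scalerN.
  have [c1 c2] := core H f1 f2 f3.
  rewrite hc in c1 c2; rewrite /Inv subrK; split => //.
  + by rewrite (brC H) c2 scalerN opprK.
  + by move: c1; rewrite !(brNr H) scalerN => /eqP; rewrite eqr_opp => /eqP.
Qed.

Definition REL {K : numFieldType} {V : lmodType K} (br : V -> V -> V) (A G : int -> V) (d : int) :=
  forall m, br (A (m + d)) (A m) = 4 *: G d.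
Definition R3 {K : numFieldType} {V : lmodType K} (br : V -> V -> V) (A G : int -> V) (l : int) :=
  forall j, br (A j) (G l) = 2 *: A (j - l) - 2 *: A (j + l).

Lemma REL0 {K : numFieldType} {V : lmodType K} {br : V -> V -> V} {A G : int -> V} :
  lie_bracket br -> (forall d, G d = (1/4) *: br (A d) (A 0)) -> REL br A G 0.
Proof. by move=> H hG m; rewrite addr0 hG !(brxx H) !scaler0. Qed.

Lemma G0 {K : numFieldType} {V : lmodType K} {br : V -> V -> V} {A G : int -> V} :
  lie_bracket br -> (forall d, G d = (1/4) *: br (A d) (A 0)) -> G 0 = 0.
Proof. by move=> H hG; rewrite hG (brxx H) scaler0. Qed.

Lemma R3_1 {K : numFieldType} {V : lmodType K} {br : V -> V -> V} {A G : int -> V} :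
  lie_bracket br ->
  (forall m, A (m - 1) - A (m + 1) = (1/2) *: br (A m) (G 1)) -> R3 br A G 1.
Proof.
move=> H Hrec j.
apply: (@lin_use _ _ _ _ ((-2) *: (A (j - 1) - A (j + 1) - (1/2) *: br (A j) (G 1)))).
  lcomb K.
by rewrite (subE (Hrec j)) scaler0.
Qed.

Lemma Gneg {K : numFieldType} {V : lmodType K} {br : V -> V -> V} {A G : int -> V} {d : int} :
  lie_bracket br -> (forall d, G d = (1/4) *: br (A d) (A 0)) ->
  REL br A G d -> G (- d) = - G d.
Proof.
move=> H hG hR; have := hR (- d); rewrite addNr => h.
by rewrite [G (- d)]hG (brC H) h; lcomb K.
Qed.

Lemma RELneg {K : numFieldType} {V : lmodType K} {br : V -> V -> V} {A G : int -> V} {d : int} :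
  lie_bracket br -> (forall d, G d = (1/4) *: br (A d) (A 0)) ->
  REL br A G d -> REL br A G (- d).
Proof.
move=> H hG hR m; have := hR (m - d); rewrite subrK => h.
by rewrite (brC H) h (Gneg H hG hR); lcomb K.
Qed.

Lemma R3_step {K : numFieldType} {V : lmodType K} {br : V -> V -> V} {A G : int -> V} {l : int} :
  lie_bracket br -> (forall d, G d = (1/4) *: br (A d) (A 0)) ->
  (forall m, A (m - 1) - A (m + 1) = (1/2) *: br (A m) (G 1)) ->
  REL br A G (l + 1) -> REL br A G l -> REL br A G 1 -> R3 br A G l -> R3 br A G (l + 1).
Proof.
move=> H hG Hrec hl1 hl h1 IH j.
have hA : 4 *: br (A j) (G (l + 1)) = br (A j) (br (A (j + l)) (A (j - 1))).
  have := hl1 (j - 1); rewrite (_ : j - 1 + (l + 1) = j + l); last by ring.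
  by move=> ->; rewrite (brZr H).
apply: (@scI _ _ 4); first by rewrite pnatr_eq0.
rewrite hA (jac H).
have e1 : br (A j) (A (j + l)) = 4 *: - G l.
  have := RELneg H hG hl (j + l); rewrite addrK => ->.
  by rewrite (Gneg H hG hl).
have e2 : br (A j) (A (j - 1)) = 4 *: G 1.
  by have := h1 (j - 1); rewrite subrK.
rewrite e1 e2 (brZl H) (brZr H) (brNl H) (brC H (G l)) IH (R3_1 H Hrec).
rewrite (_ : j - 1 - l = j - (l + 1)); last by ring.
rewrite (_ : j - 1 + l = j + l - 1); last by ring.
rewrite (_ : j + l + 1 = j + (l + 1)); last by ring.
lcomb K.
Qed.

Lemma R3_bnd {K : numFieldType} {V : lmodType K} {br : V -> V -> V} {A G : int -> V} (N : nat) :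
  lie_bracket br -> (forall d, G d = (1/4) *: br (A d) (A 0)) ->
  (forall m, A (m - 1) - A (m + 1) = (1/2) *: br (A m) (G 1)) ->
  (forall d : nat, (d <= N)%N -> REL br A G d) ->
  forall l : nat, (l <= N)%N -> R3 br A G l.
Proof.
move=> H hG Hrec hR; elim => [_ j|l IH hl].
  by rewrite (G0 H hG) (br0r H); lcomb K.
have -> : (l.+1 : int) = (l : int) + 1 by rewrite -addn1 PoszD.
apply: (R3_step H hG Hrec).
- by rewrite -PoszD addn1; apply: hR.
- by apply: hR; apply: ltnW.
- by apply: (hR 1%N); apply: leq_trans hl.
- by apply: IH; apply: ltnW.
Qed.

Lemma lin_hyp {K : pzRingType} {V : lmodType K} {p q : V} (c : K) (l r : V) :
  p = q -> l - r = c *: (p - q) -> l = r.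
Proof. by move=> h e; apply/eqP; rewrite -subr_eq0 e h subrr scaler0. Qed.

Lemma REL_step {K : numFieldType} {V : lmodType K} {br : V -> V -> V} {A G : int -> V} (n : nat) :
  lie_bracket br -> (forall d, G d = (1/4) *: br (A d) (A 0)) ->
  (forall m, A (m - 1) - A (m + 1) = (1/2) *: br (A m) (G 1)) ->
  (forall d : nat, (d <= n.+1)%N -> REL br A G d) -> REL br A G (n.+2).
Proof.
move=> H hG Hrec hR.
have R3N := R3_bnd n.+1 H hG Hrec hR n.+1 (leqnn n.+1).
have hRn := hR n (leqnSn n).
have hRN := hR n.+1 (leqnn n.+1).
pose f := fun m : int => br (A (m + (n.+2 : int))) (A m).
have hs : forall m, f m = f (m - 1) + 2 *: br (G 1) (G n.+1).
  move=> m; have J := jac H (G 1) (A (m + (n.+1 : int))) (A m).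
  rewrite hRN (brC H (G 1) (A (m + _))) (brC H (G 1) (A m)) !(R3_1 H Hrec) in J.
  bx H.
  move: J; bx H; bx H.
  have e1 : br (A (m + (n.+1 : int) - 1)) (A m) = 4 *: G n.
    by rewrite (_ : m + (n.+1 : int) - 1 = m + (n : int)) ?hRn //; lia.
  have e4 : br (A (m + (n.+1 : int))) (A (m + 1)) = 4 *: G n.
    by rewrite (_ : m + (n.+1 : int) = m + 1 + (n : int)) ?hRn //; lia.
  rewrite e1 e4 (_ : m + (n.+1 : int) + 1 = m + (n.+2 : int)); last by lia.
  rewrite /f (_ : m - 1 + (n.+2 : int) = m + (n.+1 : int)); last by lia.
  move=> J; apply: (lin_hyp (-1/2) _ _ J); lcomb K.
have hneg : forall i : nat, f (- (i : int)) = f 0 - (2 * i%:R) *: br (G 1) (G n.+1).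
  elim=> [|i IH]; first by rewrite oppr0 mulr0 scale0r subr0.
  have := hs (- (i : int)); rewrite IH (_ : - (i : int) - 1 = - (i.+1 : int)); last by lia.
  move=> h; apply: (lin_hyp (-1) _ _ h); lcomb K.
have hy : br (G 1) (G n.+1) = 0.
  have J2 := jac H (A 1) (A 0) (G n.+1).
  rewrite !R3N in J2; move: J2; bx H; bx H.
  have g1 : br (A 1) (A (0 - (n.+1 : int))) = f (- (n.+1 : int)).
    by rewrite /f sub0r (_ : - (n.+1 : int) + (n.+2 : int) = 1) //; lia.
  have g2 : br (A 1) (A (0 + (n.+1 : int))) = - (4 *: G n).
    by rewrite (brC H) (_ : 0 + (n.+1 : int) = 1 + (n : int)) ?hRn //; lia.
  have g3 : br (A 0) (A (1 - (n.+1 : int))) = 4 *: G n.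
    have := hRn (1 - (n.+1 : int)); by rewrite (_ : 1 - (n.+1 : int) + (n : int) = 0) //; lia.
  have g4 : br (A 0) (A (1 + (n.+1 : int))) = - f 0.
    by rewrite (brC H) /f (_ : 0 + (n.+2 : int) = 1 + (n.+1 : int)) //; lia.
  have g5 : br (br (A 1) (A 0)) (G n.+1) = 4 *: br (G 1) (G n.+1).
    by rewrite [G 1]hG (brZl H); lcomb K.
  rewrite g1 g2 g3 g4 g5 hneg => J2.
  have : ((4 * n.+2)%:R : K) *: br (G 1) (G n.+1) = 0.
    apply: (lin_hyp (-1) _ _ J2); rewrite !natrM; lcomb K.
  move/eqP; rewrite scaler_eq0 pnatr_eq0 /= => /eqP //.
have hc : forall m, f m = f 0.
  apply: int_ind2 => // m IH.
    by have := hs (m + 1); rewrite addrK hy scaler0 addr0 IH.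
  by have := hs m; rewrite hy scaler0 addr0 IH.
move=> m; have := hc m; rewrite /f => ->.
by rewrite add0r [G _]hG; lcomb K.
Qed.

Lemma REL_all {K : numFieldType} {V : lmodType K} {br : V -> V -> V} {A G : int -> V} :
  lie_bracket br -> (forall d, G d = (1/4) *: br (A d) (A 0)) ->
  (forall m, A (m - 1) - A (m + 1) = (1/2) *: br (A m) (G 1)) ->
  REL br A G 1 -> forall d : int, REL br A G d.
Proof.
move=> H hG Hrec h1.
have hN : forall N d : nat, (d <= N)%N -> REL br A G d.
  elim=> [|N IH] d.
    by rewrite leqn0 => /eqP ->; apply: REL0.
  rewrite leq_eqVlt => /orP[/eqP ->|]; last by apply: IH.
  case: N IH => [|n] IH; first exact: h1.
  by apply: REL_step.
case=> n; first exact: (hN n n (leqnn n)).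
rewrite NegzE; apply: (RELneg H hG); exact: (hN n.+1).
Qed.

Lemma forward {K : numFieldType} {V : lmodType K} {br : V -> V -> V} {A G : int -> V} :
  lie_bracket br -> (forall d, G d = (1/4) *: br (A d) (A 0)) ->
  (forall m, A (m - 1) - A (m + 1) = (1/2) *: br (A m) (G 1)) ->
  REL br A G 1 ->
  forall m l : int,
     [/\ br (A m) (A l) = 4 *: G (m - l),
         br (A m) (G l) = 2 *: A (m - l) - 2 *: A (m + l)
       & br (G m) (G l) = 0].
Proof.
move=> H hG Hrec h1.
have hR := REL_all H hG Hrec h1.
have hGn : forall d, G (- d) = - G d by move=> d; apply: (Gneg H hG (hR d)).
have hrel : forall p q, br (A p) (A q) = 4 *: G (p - q).
  by move=> p q; have := hR (p - q) q; rewrite (_ : q + (p - q) = p) //; ring.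
have hR3 : forall l, R3 br A G l.
  have hb : forall n : nat, R3 br A G n.
    move=> n; apply: (R3_bnd n H hG Hrec _ n (leqnn n)) => d _; exact: hR.
  case=> n; first exact: hb.
  move=> j; rewrite NegzE hGn (brNr H) hb opprK; lcomb K.
move=> m l; split; [exact: hrel | exact: hR3 |].
have J := jac H (A m) (A 0) (G l).
rewrite !hR3 in J; move: J; bx H; bx H; rewrite !hrel.
rewrite (_ : 0 - (m - l) = - (m - l)); last by ring.
rewrite (_ : 0 - (m + l) = - (m + l)); last by ring.
rewrite (_ : m - (0 - l) = m + l); last by ring.
rewrite (_ : m - (0 + l) = m - l); last by ring.
rewrite !hGn subr0 (brZl H) => J.
apply: (lin_hyp (-1/4) _ _ J); lcomb K.
Qed.

Lemma backward {K : numFieldType} {V : lmodType K} {br : V -> V -> V} {A G : int -> V} :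
  lie_bracket br -> (forall d, G d = (1/4) *: br (A d) (A 0)) ->
  (forall m l : int,
     [/\ br (A m) (A l) = 4 *: G (m - l),
         br (A m) (G l) = 2 *: A (m - l) - 2 *: A (m + l)
       & br (G m) (G l) = 0]) ->
  br (A 1) (br (A 1) (br (A 1) (A 0))) = 16 *: br (A 1) (A 0) /\
  br (A 0) (br (A 0) (br (A 0) (A 1))) = 16 *: br (A 0) (A 1).
Proof.
move=> H hG h.
have hrel : forall p q, br (A p) (A q) = 4 *: G (p - q) by move=> p q; case: (h p q).
have hR3 : forall p q, br (A p) (G q) = 2 *: A (p - q) - 2 *: A (p + q) by move=> p q; case: (h p q).
have hm : G (-1) = - G 1.
  have := hrel 0 1; rewrite (brC H) hrel subr0 sub0r => e.
  by apply: (@scI _ _ 4); rewrite ?pnatr_eq0 // -e scalerN.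
split.
- rewrite !hrel (brZr H) hR3; bx H; rewrite !hrel.
  apply: (lin_hyp (-32) _ _ hm); lcomb K.
- rewrite !hrel (brZr H) hR3; bx H; rewrite !hrel.
  apply: (lin_hyp (-32) _ _ hm); lcomb K.
Qed.

Theorem theorem1 (R : realType) (V : lmodType R[i]) (br : V -> V -> V)
  (A : int -> V) :
  lie_bracket br ->
  (forall m : int,
     A (m - 1) - A (m + 1) = (1 / 2) *: br (A m) ((1 / 4) *: br (A 1) (A 0))) ->
  let G := fun m : int => (1 / 4 : R[i]) *: br (A m) (A 0) in
  (br (A 1) (br (A 1) (br (A 1) (A 0))) = 16 *: br (A 1) (A 0) /\
   br (A 0) (br (A 0) (br (A 0) (A 1))) = 16 *: br (A 0) (A 1))
  <->
  (forall m l : int,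
     [/\ br (A m) (A l) = 4 *: G (m - l),
         br (A m) (G l) = 2 *: A (m - l) - 2 *: A (m + l)
       & br (G m) (G l) = 0]).
Proof.
move=> H Hrec G.
have hG : forall d, G d = (1/4) *: br (A d) (A 0) by [].
have Hrec' : forall m, A (m - 1) - A (m + 1) = (1/2) *: br (A m) (G 1) by [].
split.
- case=> DG1 DG2.
  have i0 : Inv br A (G 1) 0.
    rewrite /Inv add0r; split.
    + by rewrite hG; lcomb (R[i]).
    + rewrite hG; bx H; rewrite (brC H (A 1) (A 0)); bx H; rewrite DG2; lcomb (R[i]).
    + rewrite hG; bx H; rewrite DG1; lcomb (R[i]).
  have hI := @inv_all _ _ br A (G 1) H Hrec' i0.
  have h1 : REL br A G 1 by move=> m; case: (hI m).
  exact: (forward H hG Hrec' h1).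
- move=> h; exact: (backward H hG h).
Qed.
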